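(* Let $\mathbb{K}$ be a field of characteristic $0$, $A=\{a_1<a_2<\cdots\}$ a countable totally ordered alphabet, and equip $\mathbb{K}\langle A\rangle^+$ with the operations $\prec,\circ,\succ$ defined on nonempty words by: $u\succ v=uv$ if $\max(u)<\max(v)$ and $0$ otherwise; $u\circ v=uv$ if $\max(u)=\max(v)$ and $0$ otherwise; $u\prec v=uv$ if $\max(u)>\max(v)$ and $0$ otherwise (extended bilinearly). Let $\mathbf{M}_1=\sum_{i\ge1}a_i$. Then the sub-dendriform-trialgebra $\mathfrak{T}$ of $\mathbb{K}\langle A\rangle^+$ generated by $\mathbf{M}_1$ is free as a dendriform trialgebra (on the generator $\mathbf{M}_1$).
   Context: $\mathbb{K}\langle A\rangle=\varprojlim\mathbb{K}\langle A_n\rangle$ with $A_n=\{a_1,\dots,a_n\}$, and $\mathbb{K}\langle A\rangle^+$ is its ideal of elements with zero constant term; $\max(w)$ denotes the greatest letter of a nonempty word $w$. A dendriform trialgebra is a vector space with bilinear operations $\prec,\circ,\succ$, with $\circ$ associative, such that, with $x\cdot y=x\prec y+x\circ y+x\succ y$: $(x\prec y)\prec z=x\prec(y\cdot z)$, $(x\succ y)\prec z=x\succ(y\prec z)$, $(x\cdot y)\succ z=x\succ(y\succ z)$, $(x\succ y)\circ z=x\succ(y\circ z)$, $(x\prec y)\circ z=x\circ(y\succ z)$, $(x\circ y)\prec z=x\circ(y\prec z)$. (With these operations $\mathbb{K}\langle A\rangle^+$ is a dendriform trialgebra.) *)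

(* Defs.v *)
From mathcomp Require Import all_boot all_order all_algebra.
Set Implicit Arguments. Unset Strict Implicit. Unset Printing Implicit Defensive.
Import GRing.Theory.
Local Open Scope ring_scope.

(* Alphabet A = {a_0 < a_1 < ...} is represented by nat (letter a_i = i);
   words are seq nat.  Elements of K<A> (the inverse limit) are represented
   as coefficient functions on words (formal series). *)
Definition series (K : fieldType) := seq nat -> K.

Section Series.
Variable K : fieldType.

Definition szero : series K := fun _ => 0.
Definition sadd (f g : series K) : series K := fun w => f w + g w.
Definition sscale (a : K) (f : series K) : series K := fun w => a * f w.

Definition maxw (w : seq nat) : nat := foldr maxn 0%N w.

(* bilinear extension of  u op v = uv if c (max u) (max v), 0 otherwise,
   for nonempty words u, v *)
Definition tri_op (c : nat -> nat -> bool) (f g : series K) : series K :=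
  fun w => \sum_(1 <= i < size w | c (maxw (take i w)) (maxw (drop i w)))
              f (take i w) * g (drop i w).

Definition sprec := tri_op (fun m n => n < m)%N.
Definition scirc := tri_op (fun m n => m == n).
Definition ssucc := tri_op (fun m n => m < n)%N.

Definition M1 : series K := fun w => if size w == 1%N then 1 else 0.

Inductive inGenM1 : series K -> Prop :=
| genM1_M1 : inGenM1 M1
| genM1_0 : inGenM1 szero
| genM1_add x y : inGenM1 x -> inGenM1 y -> inGenM1 (sadd x y)
| genM1_scale a x : inGenM1 x -> inGenM1 (sscale a x)
| genM1_prec x y : inGenM1 x -> inGenM1 y -> inGenM1 (sprec x y)
| genM1_circ x y : inGenM1 x -> inGenM1 y -> inGenM1 (scirc x y)
| genM1_succ x y : inGenM1 x -> inGenM1 y -> inGenM1 (ssucc x y).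
End Series.

Record dendTri (K : fieldType) := DendTri {
  dt_car :> lmodType K;
  dt_prec : dt_car -> dt_car -> dt_car;
  dt_circ : dt_car -> dt_car -> dt_car;
  dt_succ : dt_car -> dt_car -> dt_car;
  dt_prec_linl : forall z, linear (dt_prec ^~ z);
  dt_prec_linr : forall z, linear (dt_prec z);
  dt_circ_linl : forall z, linear (dt_circ ^~ z);
  dt_circ_linr : forall z, linear (dt_circ z);
  dt_succ_linl : forall z, linear (dt_succ ^~ z);
  dt_succ_linr : forall z, linear (dt_succ z);
  dt_circA : forall x y z, dt_circ (dt_circ x y) z = dt_circ x (dt_circ y z);
  dt_ax1 : forall x y z, dt_prec (dt_prec x y) z
             = dt_prec x (dt_prec y z + dt_circ y z + dt_succ y z);
  dt_ax2 : forall x y z, dt_prec (dt_succ x y) z = dt_succ x (dt_prec y z);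
  dt_ax3 : forall x y z, dt_succ (dt_prec x y + dt_circ x y + dt_succ x y) z
             = dt_succ x (dt_succ y z);
  dt_ax4 : forall x y z, dt_circ (dt_succ x y) z = dt_succ x (dt_circ y z);
  dt_ax5 : forall x y z, dt_circ (dt_prec x y) z = dt_circ x (dt_succ y z);
  dt_ax6 : forall x y z, dt_prec (dt_circ x y) z = dt_circ x (dt_prec y z)
}.

(* f is a morphism of dendriform trialgebras on the subset P (assumed to be
   a sub-trialgebra) of series K, into D *)
Definition dt_morph_on (K : fieldType) (D : dendTri K)
  (P : series K -> Prop) (f : series K -> D) : Prop :=
  forall x y, P x -> P y ->
    [/\ f (sadd x y) = f x + f y,
        forall a, f (sscale a x) = a *: f x,
        f (sprec x y) = dt_prec (f x) (f y),
        f (scirc x y) = dt_circ (f x) (f y)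
      & f (ssucc x y) = dt_succ (f x) (f y)].

Definition free_dendTri_on (K : fieldType) (P : series K -> Prop)
  (g : series K) : Prop :=
  forall (D : dendTri K) (d : D),
    (exists f : series K -> D, f g = d /\ dt_morph_on P f) /\
    (forall f1 f2 : series K -> D, f1 g = d -> f2 g = d ->
       dt_morph_on P f1 -> dt_morph_on P f2 ->
       forall x, P x -> f1 x = f2 x).

(* Main.v *)
From HB Require Import structures.
Require Import Defs.
From mathcomp Require Import all_boot all_order all_algebra.
From mathcomp Require Import boolp functions.
From mathcomp Require Import zify.
From Stdlib Require Import FunctionalExtensionality ClassicalEpsilon.
Import GRing.Theory.
Local Open Scope ring_scope.
Set Implicit Arguments. Unset Strict Implicit. Unset Printing Implicit Defensive.
Inductive tr := Lf | Nd of bool & tr & tr.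

Fixpoint eqtr t s := match t, s with
  | Lf, Lf => true
  | Nd k l r, Nd k' l' r' => (k == k') && eqtr l l' && eqtr r r'
  | _, _ => false end.
Lemma eqtrP : Equality.axiom eqtr.
Proof.
elim => [|k l IHl r IHr] [|k' l' r'] /=; try by constructor.
case: eqP => [<-|H]; last by constructor; case.
case: IHl => [<-|H]; last by constructor; case.
by case: IHr => [<-|H]; constructor; [|case].
Qed.
HB.instance Definition _ := hasDecEq.Build tr eqtrP.

Fixpoint tsize t := match t with Lf => 0%N | Nd _ l r => (tsize l + tsize r).+1 end.

Notation star3 p := (p.1.1 ++ p.1.2 ++ p.2).

Definition opP (rec : tr -> tr -> seq tr * seq tr * seq tr) t s :=
  match t with Lf => [::] | Nd kt t1 t2 =>
    map (Nd kt t1) (if t2 is Lf then [:: s] else star3 (rec t2 s)) end.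
Definition opC (rec : tr -> tr -> seq tr * seq tr * seq tr) t s :=
  match s with Lf => [::] | Nd ks s1 s2 =>
    if s1 is Lf then [:: Nd true t s2] else
    if ks then map (fun u => Nd true u s2) (rec t s1).1.2
    else map (fun u => Nd true u s2) (rec t s1).1.1 end.
Definition opS (rec : tr -> tr -> seq tr * seq tr * seq tr) t s :=
  match s with Lf => [::] | Nd ks s1 s2 =>
    if s1 is Lf then [:: Nd false t s2] else
    if ks then map (fun u => Nd true u s2) (rec t s1).2
    else map (fun u => Nd false u s2) (star3 (rec t s1)) end.

Fixpoint ops n t s : seq tr * seq tr * seq tr :=
  match n with 0 => ([::], [::], [::])
  | n'.+1 => (opP (ops n') t s, opC (ops n') t s, opS (ops n') t s) end.

Lemma ops_nd n t s : all (fun u => u != Lf) (star3 (ops n t s)).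
Proof.
case: n => //= n; rewrite !all_cat; apply/and3P; split.
- by case: t => // kt t1 t2; rewrite all_map; apply/allP.
- by case: s => // ks s1 s2; case: s1 => [|? ? ?] //; case: ks; rewrite all_map; apply/allP.
- by case: s => // ks s1 s2; case: s1 => [|? ? ?] //; case: ks; rewrite all_map; apply/allP.
Qed.

Lemma ops_nd1 n t s u : u \in (ops n t s).1.1 -> u != Lf.
Proof. by move=> H; apply: (allP (ops_nd n t s)); rewrite !mem_cat H. Qed.
Lemma ops_nd2 n t s u : u \in (ops n t s).1.2 -> u != Lf.
Proof. by move=> H; apply: (allP (ops_nd n t s)); rewrite !mem_cat H ?orbT. Qed.
Lemma ops_nd3 n t s u : u \in (ops n t s).2 -> u != Lf.
Proof. by move=> H; apply: (allP (ops_nd n t s)); rewrite !mem_cat H ?orbT. Qed.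

Section Gen.
Variable K : fieldType.
Variable A : dendTri K.
Variable g : A.

Fixpoint N t : A := match t with Lf => 0
  | Nd k l r => let p := match r with Lf => g | _ => dt_prec g (N r) end in
      match l with Lf => p | _ => if k then dt_circ (N l) p else dt_succ (N l) p end end.
Definition Pg r := if r is Lf then g else dt_prec g (N r).
Lemma NE k l r : N (Nd k l r) =
  if l is Lf then Pg r else if k then dt_circ (N l) (Pg r) else dt_succ (N l) (Pg r).
Proof. by case: l; case: r. Qed.

Lemma lin_sum (h : A -> A) : linear h ->
  forall (I : Type) (r : seq I) F, h (\sum_(i <- r) F i) = \sum_(i <- r) h (F i).
Proof.
move=> hl; have hD x y : h (x + y) = h x + h y by have := hl 1 x y; rewrite !scale1r.
have h0 : h 0 = 0 by apply: (addrI (h 0)); rewrite -hD !addr0.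
by move=> I; elim=> [|x r IH] F; rewrite ?big_nil ?big_cons // hD IH.
Qed.
Lemma lin_scale (h : A -> A) : linear h -> forall a x, h (a *: x) = a *: h x.
Proof.
move=> hl; have hD x y : h (x + y) = h x + h y by have := hl 1 x y; rewrite !scale1r.
have h0 : h 0 = 0 by apply: (addrI (h 0)); rewrite -hD !addr0.
by move=> a x; have := hl a x 0; rewrite !addr0 h0 addr0.
Qed.

Definition sumN (l : seq tr) := \sum_(u <- l) N u.

Lemma sumN_cat l1 l2 : sumN (l1 ++ l2) = sumN l1 + sumN l2.
Proof. by rewrite /sumN big_cat. Qed.

Lemma ops_ok n : forall t s, t != Lf -> s != Lf -> (tsize t + tsize s <= n)%N ->
  [/\ dt_prec (N t) (N s) = sumN (ops n t s).1.1,
      dt_circ (N t) (N s) = sumN (ops n t s).1.2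
    & dt_succ (N t) (N s) = sumN (ops n t s).2].
Proof.
elim: n => [|n IH] [|kt t1 t2] [|ks s1 s2] // _ _ Hsz.
move: Hsz; rewrite [tsize _]/= [tsize (Nd ks _ _)]/= => Hsz.
change (ops n.+1 (Nd kt t1 t2) (Nd ks s1 s2)) with
  (opP (ops n) (Nd kt t1 t2) (Nd ks s1 s2), opC (ops n) (Nd kt t1 t2) (Nd ks s1 s2), opS (ops n) (Nd kt t1 t2) (Nd ks s1 s2)).
rewrite [(_, _, _).1.1]/= [(_, _, _).1.2]/= [(_, _, _).2]/=.
have IHs a b : a != Lf -> b != Lf -> (tsize a + tsize b <= n)%N ->
   dt_prec (N a) (N b) + dt_circ (N a) (N b) + dt_succ (N a) (N b) = sumN (star3 (ops n a b)).
  by move=> ha hb hs; case: (IH a b ha hb hs) => -> -> ->; rewrite !sumN_cat addrA.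
set t := Nd kt t1 t2; set s := Nd ks s1 s2.
have Hnd u : u \in star3 (ops n t2 s) -> Pg u = dt_prec g (N u).
  by move=> uin; have := allP (ops_nd n t2 s) u uin; case: u {uin}.
have HQ : dt_prec (Pg t2) (N s) =
   \sum_(u <- if t2 is Lf then [:: s] else star3 (ops n t2 s)) Pg u.
  case: t2 @t Hsz Hnd => [|k2 a2 b2] t Hsz Hnd; first by rewrite big_seq1.
  change (Pg (Nd k2 a2 b2)) with (dt_prec g (N (Nd k2 a2 b2))).
  rewrite dt_ax1 IHs //; last by move: Hsz; rewrite /s /=; lia.
  rewrite /sumN (lin_sum (dt_prec_linr g)); apply/esym/eq_big_seq => u uin.
  by rewrite Hnd.
split.
- rewrite /opP /sumN big_map.
  rewrite [N t]NE; case: t1 @t Hsz => [|k1 a1 b1] t Hsz.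
    by rewrite HQ; apply: eq_bigr => u _; rewrite NE.
  case: kt @t Hsz => t Hsz.
    rewrite dt_ax6 HQ (lin_sum (dt_circ_linr _)); apply: eq_bigr => u _; by rewrite NE.
  rewrite dt_ax2 HQ (lin_sum (dt_succ_linr _)); apply: eq_bigr => u _; by rewrite NE.
- clear Hnd HQ; rewrite /opC [N s]NE; case: s1 @s Hsz => [|k1 a1 b1] s Hsz.
    by rewrite /sumN big_seq1 NE.
  have Hs' : (tsize t + tsize (Nd k1 a1 b1) <= n)%N by move: Hsz; rewrite /t /=; lia.
  case: (IH t (Nd k1 a1 b1) isT isT Hs') => Hp Hc Hs.
  case: ks @s Hsz => s Hsz.
    rewrite -dt_circA Hc /sumN big_map (lin_sum (dt_circ_linl _)).
    by apply: eq_big_seq => u uin; rewrite [N (Nd true u _)]NE; have := ops_nd2 uin; case: u {uin}.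
  rewrite -dt_ax5 Hp /sumN big_map (lin_sum (dt_circ_linl _)).
  by apply: eq_big_seq => u uin; rewrite [N (Nd true u _)]NE; have := ops_nd1 uin; case: u {uin}.
- clear Hnd HQ; rewrite /opS [N s]NE; case: s1 @s Hsz => [|k1 a1 b1] s Hsz.
    by rewrite /sumN big_seq1 NE.
  have Hs' : (tsize t + tsize (Nd k1 a1 b1) <= n)%N by move: Hsz; rewrite /t /=; lia.
  case: (IH t (Nd k1 a1 b1) isT isT Hs') => Hp Hc Hs.
  case: ks @s Hsz => s Hsz.
    rewrite -dt_ax4 Hs /sumN big_map (lin_sum (dt_circ_linl _)).
    by apply: eq_big_seq => u uin; rewrite [N (Nd true u _)]NE; have := ops_nd3 uin; case: u {uin}.
  rewrite -dt_ax3 IHs // /sumN big_map (lin_sum (dt_succ_linl _)).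
  apply: eq_big_seq => u uin; rewrite [N (Nd false u _)]NE.
  by have := allP (ops_nd n t (Nd k1 a1 b1)) u uin; case: u {uin}.
Qed.
End Gen.

Lemma maxw_cat (s1 s2 : seq nat) : maxw (s1 ++ s2) = maxn (maxw s1) (maxw s2).
Proof. elim: s1 => [|a s IH] /=; first by rewrite max0n. by rewrite IH maxnA. Qed.

Inductive vt := VL | VN of nat & bool & vt & vt.
Fixpoint ins (a : nat) t := match t with
  | VL => VN a false VL VL
  | VN m k l r => if (m < a)%N then VN a false VL t
                  else if a == m then VN m true (ins a l) r
                  else VN m (if l is VL then false else k) (ins a l) r end.
Fixpoint forget t := match t with VL => Lf | VN _ k l r => Nd k (forget l) (forget r) end.
Definition vof (w : seq nat) := foldr ins VL w.
Definition shape w := forget (vof w).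
Definition rootv t := if t is VN m _ _ _ then m else 0%N.

Lemma ins_nVL a t : ins a t <> VL.
Proof. by case: t => //= m k l r; case: ifP => //; case: ifP. Qed.

Lemma rootv_vof w : rootv (vof w) = maxw w.
Proof.
elim: w => //= a w IH; case E: (vof w) => [|m k l r] /=; rewrite E /= in IH.
  by rewrite -IH maxn0.
case: ifP => [h|h]; first by rewrite -IH /=; lia.
by case: ifP => [/eqP h2|h2] /=; rewrite -IH /=; lia.
Qed.

Lemma shape_nil w : (shape w == Lf) = (w == [::]).
Proof.
case: w => // a w; rewrite /shape /=.
by case E: (ins a (vof w)) => //; case: (ins_nVL E).
Qed.

Lemma maxw_le (s : seq nat) x : (maxw s <= x)%N = all (fun b => b <= x)%N s.
Proof. by elim: s => //= a s IH; rewrite geq_max IH. Qed.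

Lemma maxw_lt (s : seq nat) x : s != [::] -> (maxw s < x)%N = all (fun b => b < x)%N s.
Proof.
elim: s => //= a s IH _; case: s IH => [|b s] IH /=; first by rewrite andbT maxn0.
by rewrite gtn_max IH.
Qed.

Lemma insL m T L : all (fun b => b <= m)%N L ->
  foldr ins (VN m false VL T) L = VN m ((L != [::]) && (maxw L == m)) (vof L) T.
Proof.
elim: L => //= a L IH /andP[am aL]; rewrite IH //= ltnNge am /=.
have Lm : (maxw L <= m)%N by rewrite maxw_le.
case: eqP => [->|/eqP ne]; first by congr VN; apply/esym/eqP; lia.
congr VN; case: L IH aL Lm => [|b L] IH aL Lm /=.
  by apply/esym/eqP; move: ne; rewrite maxn0; lia.
case E: (vof (b :: L)) => [|? ? ? ?]; first by case: (ins_nVL E).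
move: E Lm; rewrite /vof /= => -> /= Lm; apply/eqP/eqP; lia.
Qed.

Lemma shape_split L m R : all (fun b => b <= m)%N L -> all (fun b => b < m)%N R ->
  shape (L ++ m :: R) = Nd ((L != [::]) && (maxw L == m)) (shape L) (shape R).
Proof.
move=> HL HR; rewrite /shape /vof foldr_cat /=.
have -> : ins m (foldr ins VL R) = VN m false VL (vof R).
  case: R HR => [|b R] HR //=.
  have := rootv_vof (b :: R); rewrite /vof /=.
  case E: (ins b (foldr ins VL R)) => [|m' k l r] /=; first by case: (ins_nVL E).
  move=> hm; have lt : (m' < m)%N.
    by rewrite hm; have := maxw_lt m (isT : b :: R != [::]); rewrite /= => ->.
  by rewrite /= lt.
by rewrite (insL (vof R) HL).
Qed.

Lemma decomp w : w != [::] -> exists L m R, [/\ w = L ++ m :: R,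
  all (fun b => b <= m)%N L & all (fun b => b < m)%N R].
Proof.
elim: w => //= a w IH _; case: w IH => [|b w] IH.
  by exists [::], a, [::].
case: (IH isT) => L [m [R [E HL HR]]].
case: (ltnP m a) => am.
  exists [::], a, (b :: w); split => //; rewrite E all_cat /=.
  apply/and3P; split.
  - by apply/allP => x /(allP HL) xm; lia.
  - exact: am.
  - by apply/allP => x /(allP HR) xm; lia.
by exists (a :: L), m, R; rewrite E /= am.
Qed.

Lemma split_uniq L1 m1 R1 L2 m2 R2 : L1 ++ m1 :: R1 = L2 ++ m2 :: R2 ->
  all (fun b => b <= m1)%N L1 -> all (fun b => b < m1)%N R1 ->
  all (fun b => b <= m2)%N L2 -> all (fun b => b < m2)%N R2 -> size L1 = size L2.
Proof.
move=> E HL1 HR1 HL2 HR2.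
have key : forall L1 m1 R1 L2 m2 R2, L1 ++ m1 :: R1 = L2 ++ m2 :: R2 ->
  all (fun b => b <= m1)%N L1 -> all (fun b => b < m1)%N R1 ->
  all (fun b => b <= m2)%N L2 -> all (fun b => b < m2)%N R2 -> ~ (size L1 < size L2)%N.
  move=> {E HL1 HR1 HL2 HR2 L1 m1 R1 L2 m2 R2} L1 m1 R1 L2 m2 R2 E HL1 HR1 HL2 HR2 lt.
  have e1 : m1 = nth 0%N L2 (size L1).
    by move: (congr1 (nth 0%N ^~ (size L1)) E); rewrite /= !nth_cat ltnn subnn lt.
  have e2 : nth 0%N (m1 :: R1) (size L2 - size L1) = m2.
    by move: (congr1 (nth 0%N ^~ (size L2)) E); rewrite /= !nth_cat ltnn subnn ltnNge (ltnW lt).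
  have h1 : (m1 <= m2)%N by rewrite e1; apply: (allP HL2); rewrite mem_nth.
  have hsz : ((size L2 - size L1).-1 < size R1)%N.
    have := congr1 size E; rewrite !size_cat /=; lia.
  have h2 : (m2 < m1)%N.
    move: e2 hsz; case E2: (size L2 - size L1)%N => [|k] /=; first by lia.
    by move=> <- hk; apply: (allP HR1); rewrite mem_nth.
  lia.
case: (ltngtP (size L1) (size L2)) => // h.
- by case: (key _ _ _ _ _ _ E HL1 HR1 HL2 HR2 h).
- by case: (key _ _ _ _ _ _ (esym E) HL2 HR2 HL1 HR1 h).
Qed.

Section Ser.
Variable K : fieldType.

Lemma sum_cond (m n N : nat) (P : pred nat) (F : nat -> K) : (n <= N)%N ->
  \sum_(m <= i < n | P i) F i = \sum_(0 <= i < N) ((m <= i) && (i < n) && P i)%N%:R * F i.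
Proof.
move=> nN; rewrite (big_nat_widen _ _ _ _ _ nN) (big_nat_widenl _ _ _ _ _ (leq0n m)) big_mkcond.
apply: eq_bigr => i _; by case: (P i); case: (i < n)%N; case: (m <= i)%N; rewrite /= ?mul1r ?mul0r.
Qed.

Definition F3 (f g h : series K) (w : seq nat) j i :=
  f (take j w) * g (drop j (take i w)) * h (drop i w).
Definition om (phi : nat -> nat -> nat -> bool) (w : seq nat) j i : K :=
  ((0 < j) && (j < i) && phi (maxw (take j w)) (maxw (drop j (take i w))) (maxw (drop i w)))%N%:R.
Definition T3 phi f g h w :=
  \sum_(0 <= i < size w) \sum_(0 <= j < size w) om phi w j i * F3 f g h w j i.

Lemma tri_left c1 c2 f g h w :
  tri_op c2 (tri_op c1 f g) h w = T3 (fun a b c => c1 a b && c2 (maxn a b) c) f g h w.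
Proof.
rewrite /tri_op /T3 (@sum_cond _ _ _ _ _ (leqnn _)).
apply: eq_big_nat => i /andP[_ iw].
rewrite (@sum_cond _ _ (size w)); last by rewrite size_take; case: ifP => // _; apply: ltnW.
rewrite mulr_suml mulr_sumr; apply: eq_bigr => j _.
rewrite /om /F3 size_takel ?(ltnW iw) //.
case: (boolP ((0 < j) && (j < i))%N) => [/andP[j0 ji]|]; last first.
  by case: (0 < j)%N; case: (j < i)%N; rewrite //= !mul0r ?mulr0.
rewrite take_takel ?(ltnW ji) //=.
have Hi : maxw (take i w) = maxn (maxw (take j w)) (maxw (drop j (take i w))).
  by rewrite -maxw_cat -{1}(cat_take_drop j (take i w)) take_takel // ltnW.
rewrite Hi iw (leq_ltn_trans (leq0n j) ji) /=.
by case: (c1 _ _); case: (c2 _ _); rewrite /= ?mul1r ?mul0r ?mulrA.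
Qed.


Lemma tri_right c1 c2 f g h w :
  tri_op c2 f (tri_op c1 g h) w = T3 (fun a b c => c2 a (maxn b c) && c1 b c) f g h w.
Proof.
rewrite /tri_op /T3 (@sum_cond _ _ _ _ _ (leqnn _)) [RHS]exchange_big /=.
apply: eq_big_nat => j /andP[_ jw].
rewrite size_drop.
rewrite (eq_big (fun k => c1 (maxw (drop j (take (k + j) w))) (maxw (drop (k + j) w)))
   (fun k => g (drop j (take (k + j) w)) * h (drop (k + j) w))); first last.
- by move=> k _; rewrite take_drop drop_drop.
- by move=> k; rewrite take_drop drop_drop.
rewrite -(big_addn 1 (size w) j (fun i => c1 (maxw (drop j (take i w))) (maxw (drop i w)))
   (fun i => g (drop j (take i w)) * h (drop i w))).
rewrite (@sum_cond _ _ (size w)) // mulr_sumr mulr_sumr.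
apply: eq_big_nat => i /andP[_ iw].
rewrite /om /F3.
case: (boolP ((0 < j) && (j < i))%N) => [/andP[j0 ji]|]; last first.
  rewrite add1n.
  by case: (0 < j)%N; case: (j < i)%N; rewrite //= ?mul0r ?mulr0 ?andbF.
have Hj : maxw (drop j w) = maxn (maxw (drop j (take i w))) (maxw (drop i w)).
  by rewrite -maxw_cat -{1}(cat_take_drop i w) drop_cat size_takel ?(ltnW iw) // ji.
rewrite Hj add1n ji iw j0 jw /=.
by case: (c1 _ _); case: (c2 _ _); rewrite /= ?mul1r ?mul0r ?mulr0 ?mulrA.
Qed.

Lemma T3_add3 (p1 p2 p3 q : nat -> nat -> nat -> bool) f g h w :
  (forall a b c, (p1 a b c + p2 a b c + p3 a b c)%N = q a b c :> nat) ->
  T3 p1 f g h w + T3 p2 f g h w + T3 p3 f g h w = T3 q f g h w.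
Proof.
move=> H; rewrite /T3 -!big_split /=; apply: eq_bigr => i _.
rewrite -!big_split /=; apply: eq_bigr => j _.
rewrite /om -!mulrDl -!natrD; congr (_%:R * _).
have := H (maxw (take j w)) (maxw (drop j (take i w))) (maxw (drop i w)).
by case: ((0 < j) && (j < i))%N.
Qed.

Lemma T3_ext (p q : nat -> nat -> nat -> bool) f g h w : (forall a b c, p a b c = q a b c) -> T3 p f g h w = T3 q f g h w.
Proof. by move=> H; rewrite /T3 /om; apply: eq_bigr => i _; apply: eq_bigr => j _; rewrite H. Qed.

Definition SL : lmodType K := (seq nat -> K^o : lmodType K).

Lemma SaddE (x y : SL) w : (x + y) w = x w + y w. Proof. by []. Qed.
Lemma SscaleE a (x : SL) w : (a *: x) w = a * x w. Proof. by []. Qed.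
Lemma S0E w : (0 : SL) w = 0. Proof. by []. Qed.
Lemma SsumE I (r : seq I) (F : I -> SL) w : (\sum_(i <- r) F i) w = \sum_(i <- r) F i w.
Proof. by elim: r => [|x r IH]; rewrite ?big_nil ?big_cons // SaddE IH. Qed.

Lemma tri_linl c (z : SL) : linear (fun x : SL => (@tri_op K c x z : SL)).
Proof.
move=> a u v; apply: functional_extensionality => w /=.
rewrite /tri_op SaddE SscaleE mulr_sumr -big_split /=; apply: eq_bigr => i _.
by rewrite SaddE SscaleE mulrDl mulrA.
Qed.

Lemma tri_linr c (z : SL) : linear (fun x : SL => (@tri_op K c z x : SL)).
Proof.
move=> a u v; apply: functional_extensionality => w /=.
rewrite /tri_op SaddE SscaleE mulr_sumr -big_split /=; apply: eq_bigr => i _.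
by rewrite SaddE SscaleE mulrDr !mulrA [a * _]mulrC.
Qed.

Lemma tri_addl c (x y z : SL) w : @tri_op K c (x + y) z w = @tri_op K c x z w + @tri_op K c y z w.
Proof. by have := tri_linl c z 1 x y; rewrite !scale1r => ->. Qed.
Lemma tri_addr c (x y z : SL) w : @tri_op K c z (x + y) w = @tri_op K c z x w + @tri_op K c z y w.
Proof. by have := tri_linr c z 1 x y; rewrite !scale1r => ->. Qed.

Definition sP (x y : SL) : SL := @sprec K x y.
Definition sC (x y : SL) : SL := @scirc K x y.
Definition sS (x y : SL) : SL := @ssucc K x y.

Lemma sC_A x y z : sC (sC x y) z = sC x (sC y z).
Proof.
apply: functional_extensionality => w; rewrite /sC /scirc tri_left tri_right.
by apply: T3_ext => a b c; apply/idP/idP; lia.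
Qed.

Lemma s_ax1 x y z : sP (sP x y) z = sP x (sP y z + sC y z + sS y z).
Proof.
apply: functional_extensionality => w; rewrite /sP /sC /sS /sprec /scirc /ssucc tri_left !tri_addr !tri_right.
by symmetry; apply: T3_add3 => a b c; lia.
Qed.
Lemma s_ax2 x y z : sP (sS x y) z = sS x (sP y z).
Proof.
apply: functional_extensionality => w; rewrite /sP /sC /sS /sprec /ssucc tri_left tri_right.
by apply: T3_ext => a b c; apply/idP/idP; lia.
Qed.
Lemma s_ax3 x y z : sS (sP x y + sC x y + sS x y) z = sS x (sS y z).
Proof.
apply: functional_extensionality => w; rewrite /sP /sC /sS /sprec /scirc /ssucc !tri_addl !tri_left tri_right.
by apply: T3_add3 => a b c; lia.
Qed.
Lemma s_ax4 x y z : sC (sS x y) z = sS x (sC y z).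
Proof.
apply: functional_extensionality => w; rewrite /sP /sC /sS /scirc /ssucc tri_left tri_right.
by apply: T3_ext => a b c; apply/idP/idP; lia.
Qed.
Lemma s_ax5 x y z : sC (sP x y) z = sC x (sS y z).
Proof.
apply: functional_extensionality => w; rewrite /sP /sC /sS /scirc /ssucc /sprec tri_left tri_right.
by apply: T3_ext => a b c; apply/idP/idP; lia.
Qed.
Lemma s_ax6 x y z : sP (sC x y) z = sC x (sP y z).
Proof.
apply: functional_extensionality => w; rewrite /sP /sC /sS /scirc /sprec tri_left tri_right.
by apply: T3_ext => a b c; apply/idP/idP; lia.
Qed.

Definition Sdt : dendTri K := @DendTri K SL sP sC sS
  (fun z => tri_linl _ z) (fun z => tri_linr _ z)
  (fun z => tri_linl _ z) (fun z => tri_linr _ z)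
  (fun z => tri_linl _ z) (fun z => tri_linr _ z)
  sC_A s_ax1 s_ax2 s_ax3 s_ax4 s_ax5 s_ax6.
End Ser.

Fixpoint wf t := if t is Nd k l r then [&& wf l, wf r & (k ==> (l != Lf))] else true.
Definition good t := wf t && (t != Lf).
Lemma goodNd k l r : good (Nd k l r) = [&& wf l, wf r & (k ==> (l != Lf))].
Proof. by rewrite /good andbT. Qed.

Lemma in_s1 (u : tr) l1 l2 l3 : u \in l1 -> u \in l1 ++ l2 ++ l3.
Proof. by rewrite !mem_cat => ->. Qed.
Lemma in_s2 (u : tr) l1 l2 l3 : u \in l2 -> u \in l1 ++ l2 ++ l3.
Proof. by rewrite !mem_cat => ->; rewrite orbT. Qed.
Lemma in_s3 (u : tr) l1 l2 l3 : u \in l3 -> u \in l1 ++ l2 ++ l3.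
Proof. by rewrite !mem_cat => ->; rewrite !orbT. Qed.

Lemma ops_good n : forall t s, good t -> good s -> all good (star3 (ops n t s)).
Proof.
elim: n => // n IH [|kt t1 t2] [|ks s1 s2] // Gt Gs.
move: (Gt) (Gs); rewrite !goodNd => /and3P[w1 w2 wk] /and3P[v1 v2 vk].
have Hs a b u (Ga : good a) (Gb : good b) : u \in star3 (ops n a b) -> good u.
  by move=> uin; apply: (allP (IH _ _ Ga Gb)).
rewrite /= !all_cat; apply/and3P; split.
- rewrite all_map; apply/allP => u uin /=; rewrite goodNd w1 wk andbT /=.
  case: t2 w2 Gt uin => [|k2 a2 b2] w2 Gt uin.
    by move: uin => /=; rewrite inE => /eqP ->; rewrite /= v1 v2 vk.
  have Gt2 : good (Nd k2 a2 b2) by rewrite goodNd.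
  by case/andP: (Hs _ _ u Gt2 Gs uin).
- rewrite /opC; case: s1 v1 vk Gs => [|k1 a1 b1] v1 vk Gs; first by rewrite /= goodNd /= v2 andbT.
  have Gs1 : good (Nd k1 a1 b1) by rewrite goodNd.
  case: ks vk Gs => _ _; rewrite all_map; apply/allP => u uin /=; rewrite goodNd v2 /=;
    (have /andP[H1 H2] : good u by apply: (Hs _ _ u Gt Gs1); first [exact: uin | exact: in_s1 uin | exact: in_s2 uin | exact: in_s3 uin]); by rewrite H1 ?H2.
- rewrite /opS; case: s1 v1 vk Gs => [|k1 a1 b1] v1 vk Gs; first by case/andP: Gt => Gt1 _; rewrite /= goodNd Gt1 v2.
  have Gs1 : good (Nd k1 a1 b1) by rewrite goodNd.
  case: ks vk Gs => _ _; rewrite all_map; apply/allP => u uin /=; rewrite goodNd v2 /=;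
    (have /andP[H1 H2] : good u by apply: (Hs _ _ u Gt Gs1); first [exact: uin | exact: in_s1 uin | exact: in_s2 uin | exact: in_s3 uin]); by rewrite H1 ?H2.
Qed.

Definition prodl {K : fieldType} (sel : seq tr * seq tr * seq tr -> seq tr)
  (c1 c2 : seq (K * tr)) : seq (K * tr) :=
  flatten [seq flatten [seq [seq (p.1 * q.1, u) | u <- sel (ops (tsize p.2 + tsize q.2) p.2 q.2)]
     | q <- c2] | p <- c1].

Definition coef {K : fieldType} (c : seq (K * tr)) t := \sum_(p <- c | p.2 == t) p.1.

Section Gen2.
Variable K : fieldType.
Variable A : dendTri K.
Variable g : A.

Definition evl (c : seq (K * tr)) : A := \sum_(p <- c) p.1 *: N g p.2.

Lemma ev_op (op : A -> A -> A) sel :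
  (forall z, linear (op ^~ z)) -> (forall z, linear (op z)) ->
  (forall t s, t != Lf -> s != Lf ->
     op (N g t) (N g s) = sumN g (sel (ops (tsize t + tsize s) t s))) ->
  forall c1 c2, all (fun p => p.2 != Lf) c1 -> all (fun p => p.2 != Lf) c2 ->
  op (evl c1) (evl c2) = evl (prodl sel c1 c2).
Proof.
move=> hl hr H c1 c2 h1 h2.
rewrite /evl /prodl big_flatten /= big_map (lin_sum (hl _)).
apply: eq_big_seq => p pin; rewrite (lin_scale (hl _)) (lin_sum (hr _)).
rewrite big_flatten /= big_map scaler_sumr; apply: eq_big_seq => q qin.
rewrite (lin_scale (hr _)) H; last by apply: (allP h2).
  by rewrite /sumN big_map !scaler_sumr; apply: eq_bigr => u _; rewrite scalerA.
by apply: (allP h1).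
Qed.

Lemma ev_coef c (S : seq tr) : uniq S -> {subset map snd c <= S} ->
  evl c = \sum_(t <- S) coef c t *: N g t.
Proof.
move=> uS sub; rewrite /coef.
under eq_bigr do rewrite scaler_suml.
rewrite (exchange_big_dep xpredT) //= /evl; apply: eq_big_seq => p pin.
have pS : p.2 \in S by apply: sub; apply: map_f.
rewrite big_mkcond (bigD1_seq p.2) //= eqxx big1 ?addr0 // => t tp.
by rewrite eq_sym (negbTE tp).
Qed.
End Gen2.

Section Char.
Variable K : fieldType.

Lemma prec_M1 (X : series K) w : @sprec K (M1 K) X w =
  match w with a :: v => if v is [::] then 0 else ((maxw v < a)%N)%:R * X v | [::] => 0 end.
Proof.
rewrite /sprec /tri_op; case: w => [|a v]; first by rewrite big_nil.
case: v => [|b v]; first by rewrite big_nil.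
rewrite big_mkcond big_ltn //= big_nat_cond big1 ?addr0.
  by rewrite /M1 /= maxn0; case: ifP; rewrite ?mul1r ?mul0r.
move=> i /andP[/andP[hi hn] _]; case: ifP => // _.
by rewrite /M1 size_takel ?(ltnW hn) //; case: eqP => [h|]; [move: hi; rewrite h|rewrite mul0r].
Qed.

Definition Pchar r (w : seq nat) :=
  if w is a :: v then all (fun b => b < a)%N v && (shape v == r) else false.

Lemma eqNd k l r k' l' r' : (Nd k l r == Nd k' l' r') = [&& k == k', l == l' & r == r'].
Proof. by rewrite andbA. Qed.

Lemma pchar_shape r w : Pchar r w = (shape w == Nd false Lf r).
Proof.
case: w => [|a v] //=.
case: (boolP (all (fun b => b < a)%N v)) => h /=.
  by rewrite -[a :: v]cat0s shape_split // eqNd.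
apply/esym/negbTE; case: (decomp (isT : a :: v != [::])) => L [m [R [E HL HR]]].
rewrite E shape_split // eqNd; apply/negP => /and3P[_ /eqP sL _].
move/eqP: sL; rewrite shape_nil => /eqP L0; move: E h; rewrite L0 /= => -[-> ->].
by rewrite HR.
Qed.

Lemma sum_unique (s : seq nat) (b : pred nat) : uniq s ->
  (forall i j, b i -> b j -> i = j) -> \sum_(i <- s) (b i)%:R = (has b s)%:R :> K.
Proof.
move=> us bu; elim: s us => [|i s IH] /=; first by rewrite big_nil.
case/andP=> iS us; rewrite big_cons IH //.
case: (boolP (b i)) => bi //=; last by rewrite add0r.
case: (boolP (has b s)) => [/hasP[j js bj]|nh]; first by move: iS; rewrite (bu _ _ bi bj) js.
by rewrite addr0.
Qed.
End Char.

Definition ck (k : bool) (m n : nat) := if k then m == n else (m < n)%N.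

Lemma maxw_top m R : all (fun b => b < m)%N R -> maxw (m :: R) = m.
Proof. move=> h /=; case: R h => [|b R] h; first by rewrite maxn0. by move: h; rewrite -maxw_lt // => h; lia. Qed.

Definition bi k l r (w : seq nat) i :=
  ck k (maxw (take i w)) (maxw (drop i w)) && (shape (take i w) == l) && Pchar r (drop i w).

Lemma bi_dec k l r w i : l != Lf -> bi k l r w i ->
  exists m R, [/\ drop i w = m :: R, all (fun b => b <= m)%N (take i w),
     all (fun b => b < m)%N R, (i < size w)%N & shape w == Nd k l r].
Proof.
move=> nl /andP[/andP[hc /eqP hl]]; case E: (drop i w) => [|m R] //= /andP[HR /eqP hr].
rewrite E in hc.
have iw : (i < size w)%N by have := congr1 size E; rewrite size_drop /=; lia.
have HL : all (fun b => b <= m)%N (take i w).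
  by rewrite -maxw_le; move: hc; rewrite maxw_top // /ck; case: k => [/eqP ->|/ltnW].
exists m, R; split => //.
rewrite -(cat_take_drop i w) E shape_split // hl hr eqNd !eqxx !andbT.
have Ln : take i w != [::] by rewrite -shape_nil hl.
rewrite Ln /=; move: hc; rewrite maxw_top // /ck.
by case: k => [->|h] //; apply/eqP/negbTE; rewrite neq_ltn h.
Qed.

Lemma bi_has k l r w : l != Lf -> wf (Nd k l r) ->
  has (bi k l r w) (index_iota 1 (size w)) = (shape w == Nd k l r).
Proof.
move=> nl Wt; apply/idP/idP.
  by case/hasP => i _ /(bi_dec nl) [m [R [_ _ _ _ ->]]].
move=> hs; have wn : w != [::] by rewrite -shape_nil; apply: contraTN hs => /eqP ->.
case: (decomp wn) => L [m [R [E HL HR]]].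
move: hs; rewrite E shape_split // eqNd => /and3P[/eqP hk /eqP hl /eqP hr].
have Ln : L != [::] by rewrite -shape_nil hl.
apply/hasP; exists (size L).
  rewrite mem_index_iota size_cat /= addnS ltnS leq_addr andbT.
  by rewrite lt0n size_eq0.
rewrite /bi take_size_cat // drop_size_cat // maxw_top // hl eqxx andbT /=.
rewrite HR hr eqxx andbT /ck -hk Ln /=.
rewrite andbT; case: eqP => // /eqP ne; move: HL; rewrite -maxw_le => h; by rewrite ltn_neqAle ne h.
Qed.

Lemma bi_uniq k l r w : l != Lf -> forall i j, bi k l r w i -> bi k l r w j -> i = j.
Proof.
move=> nl i j /(bi_dec nl) [m1 [R1 [E1 L1 H1 i1 _]]] /(bi_dec nl) [m2 [R2 [E2 L2 H2 j2 _]]].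
have E : take i w ++ m1 :: R1 = take j w ++ m2 :: R2 by rewrite -E1 -E2 !cat_take_drop.
by have := split_uniq E L1 H1 L2 H2; rewrite !size_takel // ltnW.
Qed.

Section Char2.
Variable K : fieldType.
Notation Ns := (@N K (Sdt K) (M1 K)).
Notation Ps := (@Pg K (Sdt K) (M1 K)).

Lemma tri_char k l r (Hl : forall w, Ns l w = (shape w == l)%:R)
  (Hr : forall w, Ps r w = (Pchar r w)%:R) w : l != Lf -> wf (Nd k l r) ->
  @tri_op K (ck k) (Ns l) (Ps r) w = (shape w == Nd k l r)%:R.
Proof.
move=> nl Wt; rewrite /tri_op big_mkcond -(bi_has w nl Wt) -(@sum_unique K); first last.
- exact: bi_uniq.
- by rewrite /index_iota iota_uniq.
apply: eq_bigr => i _; rewrite /bi Hl Hr; case: (ck _ _ _) => /=; by rewrite -?natrM ?mulnb.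
Qed.

Lemma Nchar t : wf t ->
  (t != Lf -> forall w, Ns t w = (shape w == t)%:R) /\ (forall w, Ps t w = (Pchar t w)%:R).
Proof.
elim: t => [|k l IHl r IHr] Wt.
  split => // w; rewrite /Pg /M1; case: w => [|a v] //=.
  by rewrite shape_nil; case: v => [|b v] /=; rewrite ?andbF.
have /and3P[wl wr wk] : [&& wf l, wf r & (k ==> (l != Lf))] := Wt.
have [Hl1 Hl2] := IHl wl; have [Hr1 Hr2] := IHr wr.
have Nch : forall w, Ns (Nd k l r) w = (shape w == Nd k l r)%:R.
  move=> w; rewrite NE; case: l {IHl} wl wk Hl1 Hl2 Wt => [|k1 a1 b1] wl wk Hl1 Hl2 Wt.
    by move: wk; case: k Wt => // Wt _; rewrite Hr2 pchar_shape.
  have nl : Nd k1 a1 b1 != Lf by [].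
  case: k Wt wk => Wt _.
    exact: (tri_char (k:=true) (Hl1 nl) Hr2 w nl Wt).
  exact: (tri_char (k:=false) (Hl1 nl) Hr2 w nl Wt).
split => // w.
have -> : Ps (Nd k l r) w = @sprec K (M1 K) (Ns (Nd k l r)) w by [].
rewrite prec_M1; case: w => [|a v] //; case: v => [|b v] //.
by rewrite Nch /Pchar -maxw_lt // -natrM mulnb.
Qed.
End Char2.

Fixpoint depth t := match t with Lf => 0%N
  | Nd false l r => (maxn (depth l) (depth r)).+1
  | Nd true l r => maxn (depth l) (depth r).+1 end.
Fixpoint wo t (m : nat) := match t with Lf => [::]
  | Nd false l r => wo l m.-1 ++ m :: wo r m.-1
  | Nd true l r => wo l m ++ m :: wo r m.-1 end.

Lemma all_le_lt (s : seq nat) m : (0 < m)%N -> all (fun b => b <= m.-1)%N s -> all (fun b => b < m)%N s.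
Proof. by move=> m0; apply: sub_all => b /= h; apply: leq_ltn_trans h _; rewrite ltn_predL. Qed.
Lemma all_le_le (s : seq nat) m : all (fun b => b <= m.-1)%N s -> all (fun b => b <= m)%N s.
Proof. by apply: sub_all => b /= h; apply: leq_trans h (leq_pred m). Qed.

Lemma wo_ok t : wf t -> forall m, (depth t <= m)%N ->
  [/\ shape (wo t m) = t, all (fun b => b <= m)%N (wo t m) & (t != Lf -> maxw (wo t m) = m)].
Proof.
elim: t => [|k l IHl r IHr] Wt m hm; first by [].
have /and3P[wl wr wk] : [&& wf l, wf r & (k ==> (l != Lf))] := Wt.
case: k Wt wk hm => Wt wk hm /=.
  have [sl al ml] := IHl wl m (leq_trans (leq_maxl _ _) hm).
  have m0 : (0 < m)%N by move: hm; rewrite geq_max => /andP[_ h]; apply: leq_trans h.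
  have hr' : (depth r <= m.-1)%N by move: hm; rewrite geq_max => /andP[_]; case: (m).
  have [sr ar mr] := IHr wr m.-1 hr'.
  have Rm := all_le_lt m0 ar.
  have Ln : wo l m != [::] by rewrite -shape_nil sl.
  have nl : l != Lf := wk.
  rewrite shape_split // sl sr Ln (ml nl) eqxx; split => //.
    by rewrite all_cat al /= leqnn (all_le_le ar).
  by move=> _; rewrite maxw_cat maxw_top // (ml nl) maxnn.
move: hm => /= hm.
have m0 : (0 < m)%N by apply: leq_trans hm.
have hl' : (depth l <= m.-1)%N by move: hm; case: (m) => //= n; rewrite ltnS geq_max => /andP[].
have [sl al ml] := IHl wl m.-1 hl'.
have hr' : (depth r <= m.-1)%N by move: hm; case: (m) => //= n; rewrite ltnS geq_max => /andP[].
have [sr ar mr] := IHr wr m.-1 hr'.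
have Rm := all_le_lt m0 ar.
have Lm := all_le_lt m0 al.
rewrite shape_split; [|exact: all_le_le|exact: Rm]; rewrite sl sr.
have lt : (maxw (wo l m.-1) < m)%N.
  by apply: (@leq_ltn_trans m.-1); [rewrite maxw_le | rewrite ltn_predL].
have -> : (maxw (wo l m.-1) == m) = false by apply/negbTE; rewrite neq_ltn lt.
rewrite andbF; split => //.
  by rewrite all_cat (all_le_le al) /= leqnn (all_le_le ar).
move=> _; rewrite maxw_cat maxw_top //; apply/maxn_idPr; exact: ltnW lt.
Qed.

Section Ev3.
Variable K : fieldType.
Variable A : dendTri K.
Variable g : A.
Definition nLf (c : seq (K * tr)) := all (fun p => p.2 != Lf) c.

Lemma evP c1 c2 : nLf c1 -> nLf c2 ->
  dt_prec (evl g c1) (evl g c2) = evl g (prodl (fun p => p.1.1) c1 c2).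
Proof.
apply: ev_op; [exact: dt_prec_linl|exact: dt_prec_linr|].
by move=> t s ht hs; case: (@ops_ok K A g _ t s ht hs (leqnn _)).
Qed.
Lemma evC c1 c2 : nLf c1 -> nLf c2 ->
  dt_circ (evl g c1) (evl g c2) = evl g (prodl (fun p => p.1.2) c1 c2).
Proof.
apply: ev_op; [exact: dt_circ_linl|exact: dt_circ_linr|].
by move=> t s ht hs; case: (@ops_ok K A g _ t s ht hs (leqnn _)).
Qed.
Lemma evS c1 c2 : nLf c1 -> nLf c2 ->
  dt_succ (evl g c1) (evl g c2) = evl g (prodl (fun p => p.2) c1 c2).
Proof.
apply: ev_op; [exact: dt_succ_linl|exact: dt_succ_linr|].
by move=> t s ht hs; case: (@ops_ok K A g _ t s ht hs (leqnn _)).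
Qed.
End Ev3.

Definition goodc {K : fieldType} (c : seq (K * tr)) := all (fun p => good p.2) c.

Lemma goodc_nLf (K : fieldType) (c : seq (K * tr)) : goodc c -> nLf c.
Proof. by apply: sub_all => p /andP[]. Qed.

Lemma goodc_prodl (K : fieldType) sel (c1 c2 : seq (K * tr)) :
  (forall p u, u \in sel p -> u \in star3 p) ->
  goodc c1 -> goodc c2 -> goodc (prodl sel c1 c2).
Proof.
move=> hs g1 g2; apply/allP => x /flattenP [l /mapP [p pin ->]] /flattenP [l' /mapP [q qin ->]].
move=> /mapP [u uin ->] /=.
apply: (allP (ops_good _ (allP g1 p pin) (allP g2 q qin))); exact: hs uin.
Qed.

Section Final.
Variable K : fieldType.
Notation evSer := (@evl K (Sdt K) (M1 K)).

Lemma SsumK I (r : seq I) (F : I -> SL K) w :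
  (\sum_(i <- r) F i) w = \sum_(i <- r) (F i w : K).
Proof. elim: r => [|x r IH]; first by rewrite !big_nil. by rewrite !big_cons SaddE IH. Qed.

Lemma evS_word c u : goodc c -> good u -> evSer c (wo u (depth u)) = coef c u.
Proof.
move=> gc /andP[wu nu]; have [su _ _] := wo_ok wu (leqnn _).
rewrite /evl SsumK /coef [RHS]big_mkcond; apply: eq_big_seq => p pin.
rewrite SscaleE; have /andP[wp np] := allP gc p pin.
have [H _] := @Nchar K _ wp; rewrite (H np) su eq_sym.
by case: eqP; rewrite ?mulr1 ?mulr0.
Qed.

Variable D : dendTri K.
Variable d : D.

Lemma welldef c1 c2 : goodc c1 -> goodc c2 -> evSer c1 = evSer c2 ->
  evl d c1 = evl d c2.
Proof.
move=> g1 g2 E; set S := undup (map snd (c1 ++ c2)).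
have uS : uniq S by exact: undup_uniq.
rewrite (ev_coef d uS); last by move=> t ti; rewrite mem_undup map_cat mem_cat ti.
rewrite (ev_coef d uS); last by move=> t ti; rewrite mem_undup map_cat mem_cat ti orbT.
apply: eq_big_seq => t tS; congr (_ *: _).
have gt : good t.
  move: tS; rewrite mem_undup => /mapP [p pin ->].
  have g12 : goodc (c1 ++ c2) by rewrite /goodc all_cat; apply/andP.
  exact: (allP g12 p pin).
by rewrite -!evS_word // E.
Qed.

Definition fD (x : series K) : D :=
  evl d (epsilon (inhabits [::]) (fun c => goodc c /\ x = evSer c)).

Lemma fD_eq x c : goodc c -> x = evSer c -> fD x = evl d c.
Proof.
move=> gc e; have ex : exists c, goodc c /\ x = evSer c by exists c.
case: (epsilon_spec (inhabits [::]) _ ex) => g' e'.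
by rewrite /fD; apply: welldef => //; rewrite -e -e'.
Qed.
End Final.

Lemma rep (K : fieldType) (x : series K) : inGenM1 x ->
  exists c, goodc c /\ x = @evl K (Sdt K) (M1 K) c.
Proof.
elim=> [|| x1 y1 _ [c1 [g1 e1]] _ [c2 [g2 e2]] | a x1 _ [c1 [g1 e1]]
       | x1 y1 _ [c1 [g1 e1]] _ [c2 [g2 e2]] | x1 y1 _ [c1 [g1 e1]] _ [c2 [g2 e2]]
       | x1 y1 _ [c1 [g1 e1]] _ [c2 [g2 e2]]].
- by exists [:: (1, Nd false Lf Lf)]; split => //; rewrite /evl big_seq1 scale1r.
- by exists [::]; split => //; rewrite /evl big_nil.
- exists (c1 ++ c2); split; first by rewrite /goodc all_cat; apply/andP.
  by rewrite /evl big_cat e1 e2.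
- exists [seq (a * p.1, p.2) | p <- c1]; split.
    by rewrite /goodc all_map.
  rewrite e1; transitivity (a *: @evl K (Sdt K) (M1 K) c1); first by [].
  by rewrite /evl big_map scaler_sumr; apply: eq_bigr => p _; rewrite scalerA.
- exists (prodl (fun p => p.1.1) c1 c2); split.
    by apply: goodc_prodl => // p u; exact: in_s1.
  by rewrite e1 e2; exact: (@evP K (Sdt K) (M1 K) _ _ (goodc_nLf g1) (goodc_nLf g2)).
- exists (prodl (fun p => p.1.2) c1 c2); split.
    by apply: goodc_prodl => // p u; exact: in_s2.
  by rewrite e1 e2; exact: (@evC K (Sdt K) (M1 K) _ _ (goodc_nLf g1) (goodc_nLf g2)).
- exists (prodl (fun p => p.2) c1 c2); split.
    by apply: goodc_prodl => // p u; exact: in_s3.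
  by rewrite e1 e2; exact: (@evS K (Sdt K) (M1 K) _ _ (goodc_nLf g1) (goodc_nLf g2)).
Qed.

Lemma f0 (K : fieldType) (D : dendTri K) (f : series K -> D) :
  dt_morph_on (@inGenM1 K) f -> f (szero K) = 0.
Proof.
move=> hf; have [H _ _ _ _] := hf _ _ (genM1_0 K) (genM1_0 K).
have E : sadd (szero K) (szero K) = szero K.
  by apply: functional_extensionality => w; rewrite /sadd /szero addr0.
rewrite E in H; apply/esym; apply: (addrI (f (szero K))); by rewrite -H addr0.
Qed.

Theorem mainTheorem2 (K : fieldType) (charK0 : [pchar K] =i pred0) :
  free_dendTri_on (@inGenM1 K) (M1 K).
Proof.
move=> D d; split.
  exists (fD d); split.
    rewrite (@fD_eq K D d _ [:: (1, Nd false Lf Lf)]) //.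
      by rewrite /evl big_seq1 scale1r.
    by rewrite /evl big_seq1 scale1r.
  move=> x y Px Py.
  have [cx [gx ex]] := rep Px; have [cy [gy ey]] := rep Py.
  have fx := fD_eq d gx ex; have fy := fD_eq d gy ey.
  split.
  - rewrite fx fy (@fD_eq K D d _ (cx ++ cy)); first by rewrite /evl big_cat.
      by rewrite /goodc all_cat; apply/andP.
    by rewrite ex ey /evl big_cat.
  - move=> a; rewrite fx (@fD_eq K D d _ [seq (a * p.1, p.2) | p <- cx]).
    + by rewrite /evl big_map scaler_sumr; apply: eq_bigr => p _; rewrite scalerA.
    + by rewrite /goodc all_map.
    + rewrite ex; transitivity (a *: @evl K (Sdt K) (M1 K) cx); first by [].
      by rewrite /evl big_map scaler_sumr; apply: eq_bigr => p _; rewrite scalerA.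
  - rewrite fx fy (@fD_eq K D d _ (prodl (fun p => p.1.1) cx cy)).
    + by rewrite (evP d (goodc_nLf gx) (goodc_nLf gy)).
    + by apply: goodc_prodl => // p u; exact: in_s1.
    + by rewrite ex ey; exact: (@evP K (Sdt K) (M1 K) _ _ (goodc_nLf gx) (goodc_nLf gy)).
  - rewrite fx fy (@fD_eq K D d _ (prodl (fun p => p.1.2) cx cy)).
    + by rewrite (evC d (goodc_nLf gx) (goodc_nLf gy)).
    + by apply: goodc_prodl => // p u; exact: in_s2.
    + by rewrite ex ey; exact: (@evC K (Sdt K) (M1 K) _ _ (goodc_nLf gx) (goodc_nLf gy)).
  - rewrite fx fy (@fD_eq K D d _ (prodl (fun p => p.2) cx cy)).
    + by rewrite (evS d (goodc_nLf gx) (goodc_nLf gy)).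
    + by apply: goodc_prodl => // p u; exact: in_s3.
    + by rewrite ex ey; exact: (@evS K (Sdt K) (M1 K) _ _ (goodc_nLf gx) (goodc_nLf gy)).
move=> f1 f2 h1 h2 m1 m2 x Px; elim: Px => {x}.
- by rewrite h1 h2.
- by rewrite (f0 m1) (f0 m2).
- move=> x y Px IHx Py IHy.
  by have [-> _ _ _ _] := m1 x y Px Py; have [-> _ _ _ _] := m2 x y Px Py; rewrite IHx IHy.
- move=> a x Px IHx.
  by have [_ -> _ _ _] := m1 x x Px Px; have [_ -> _ _ _] := m2 x x Px Px; rewrite IHx.
- move=> x y Px IHx Py IHy.
  by have [_ _ -> _ _] := m1 x y Px Py; have [_ _ -> _ _] := m2 x y Px Py; rewrite IHx IHy.
- move=> x y Px IHx Py IHy.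
  by have [_ _ _ -> _] := m1 x y Px Py; have [_ _ _ -> _] := m2 x y Px Py; rewrite IHx IHy.
- move=> x y Px IHx Py IHy.
  by have [_ _ _ _ ->] := m1 x y Px Py; have [_ _ _ _ ->] := m2 x y Px Py; rewrite IHx IHy.
Qed.
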